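(* Let $G$ be a real algebraic group and $H,L$ real algebraic subgroups, with complexifications $G_{\mathbb C},H_{\mathbb C},L_{\mathbb C}$. Put $X'_{\mathbb C}=H_{\mathbb C}\backslash G_{\mathbb C}$, $X_{\mathbb C}=G_{\mathbb C}/L_{\mathbb C}$, $$\Xi'=\{\mathcal O'\in X'_{\mathbb C}/L_{\mathbb C}:\mathcal O'(\mathbb R)\ne\emptyset\},\qquad \Xi=\{\mathcal O\in H_{\mathbb C}\backslash X_{\mathbb C}:\mathcal O(\mathbb R)\neq\emptyset\},$$ both regarded as subsets of $H_{\mathbb C}\backslash G_{\mathbb C}/L_{\mathbb C}$. If $H^1(\mathbb R,H_{\mathbb C})=1$, then $\Xi'\subset\Xi$. If moreover $H^1(\mathbb R,L_{\mathbb C})=1$, then $\Xi'=\Xi$.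
   Context: $H^1(\mathbb R,\cdot)$ denotes first Galois cohomology for $\mathrm{Gal}(\mathbb C/\mathbb R)$ acting through the given real structures; $\mathcal O(\mathbb R)$ denotes the set of real points of an orbit. An $L_{\mathbb C}$-orbit $\mathcal O'$ in $X'_{\mathbb C}$ and an $H_{\mathbb C}$-orbit $\mathcal O$ in $X_{\mathbb C}$ are identified with the same element of $H_{\mathbb C}\backslash G_{\mathbb C}/L_{\mathbb C}$ when they come from the same double coset. *)

(* Defs.v *)
Set Implicit Arguments.

(* A group G_C together with the antiholomorphic involution sigma defining
   the real structure (Galois action of complex conjugation). *)
Record RealGroup := {
  carrier :> Type;
  mul : carrier -> carrier -> carrier;
  one : carrier;
  inv : carrier -> carrier;
  sigma : carrier -> carrier;
  mulA : forall x y z, mul x (mul y z) = mul (mul x y) z;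
  mul1g : forall x, mul one x = x;
  mulg1 : forall x, mul x one = x;
  mulVg : forall x, mul (inv x) x = one;
  mulgV : forall x, mul x (inv x) = one;
  sigma_mul : forall x y, sigma (mul x y) = mul (sigma x) (sigma y);
  sigma_invol : forall x, sigma (sigma x) = x
}.

Arguments mul {_} _ _.
Arguments one {_}.
Arguments inv {_} _.
Arguments sigma {_} _.

(* A subgroup H_C of G_C defined over R (stable under sigma). *)
Record RealSubgroup (G : RealGroup) := {
  mem :> G -> Prop;
  mem1 : mem one;
  memM : forall x y, mem x -> mem y -> mem (mul x y);
  memV : forall x, mem x -> mem (inv x);
  memS : forall x, mem x -> mem (sigma x)
}.

(* H^1(R, H_C) = 1 : every 1-cocycle h (h * sigma h = 1) is a coboundary
   h = b^{-1} sigma(b) with b in H_C. *)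
Definition H1_trivial (G : RealGroup) (H : RealSubgroup G) : Prop :=
  forall h : G, H h -> mul h (sigma h) = one ->
    exists b : G, H b /\ h = mul (inv b) (sigma b).

Definition in_double_coset (G : RealGroup) (H L : RealSubgroup G) (g x : G) : Prop :=
  exists h l : G, H h /\ L l /\ x = mul h (mul g l).

(* Xi' : the L_C-orbit of H_C g in H_C\G_C has a real point, i.e. some coset
   H_C x (x in H g L) is sigma-fixed: sigma(H x) = H x. *)
Definition Xi' (G : RealGroup) (H L : RealSubgroup G) (g : G) : Prop :=
  exists x : G, in_double_coset H L g x /\
    exists h : G, H h /\ sigma x = mul h x.

(* Xi : the H_C-orbit of g L_C in G_C/L_C has a real point, i.e. some coset
   x L_C (x in H g L) is sigma-fixed: sigma(x L) = x L. *)
Definition Xi (G : RealGroup) (H L : RealSubgroup G) (g : G) : Prop :=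
  exists x : G, in_double_coset H L g x /\
    exists l : G, L l /\ sigma x = mul x l.

(* Main.v *)
Require Import Defs.

Section Aux.
Variable G : RealGroup.

Lemma lcancel (a x y : G) : mul a x = mul a y -> x = y.
Proof.
  intro E. rewrite <- (mul1g G x), <- (mul1g G y), <- (mulVg G a), <- !mulA, E. reflexivity.
Qed.

Lemma rcancel (a x y : G) : mul x a = mul y a -> x = y.
Proof.
  intro E. rewrite <- (mulg1 G x), <- (mulg1 G y), <- (mulgV G a), !mulA, E. reflexivity.
Qed.

Lemma sigma_one : sigma (one : G) = one.
Proof.
  apply (lcancel (sigma (one:G))). rewrite <- sigma_mul, !mulg1. reflexivity.
Qed.

Lemma sigma_inv (a : G) : sigma (inv a) = inv (sigma a).
Proof.
  apply (lcancel (sigma a)). rewrite <- sigma_mul, !mulgV, sigma_one. reflexivity.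
Qed.

Lemma inv_unique (a b : G) : mul a b = one -> b = inv a.
Proof.
  intro E. apply (lcancel a). rewrite E, mulgV. reflexivity.
Qed.
End Aux.
Arguments lcancel {G}. Arguments rcancel {G}. Arguments sigma_one {G}. Arguments sigma_inv {G}. Arguments inv_unique {G}.

Theorem lemmaB2 (G : RealGroup) (H L : RealSubgroup G) :
  H1_trivial H ->
  (forall g : G, Xi' H L g -> Xi H L g) /\
  (H1_trivial L -> forall g : G, Xi' H L g <-> Xi H L g).
Proof.
  intros HH.
  assert (A : forall g : G, Xi' H L g -> Xi H L g).
  { intros g [x [[h0 [l0 [Hh0 [Ll0 Ex]]]] [h [Hh Es]]]].
    assert (C : mul (sigma h) h = one).
    { apply (rcancel x). rewrite <- mulA, <- Es, <- sigma_mul, <- Es, sigma_invol, mul1g. reflexivity. }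
    assert (C' : mul (sigma h) (sigma (sigma h)) = one) by (rewrite sigma_invol; exact C).
    destruct (HH (sigma h) (memS H h Hh) C') as [b [Hb Eb]].
    assert (Eh : h = mul (inv (sigma b)) b).
    { rewrite <- (sigma_invol G h), Eb, sigma_mul, sigma_invol, sigma_inv. reflexivity. }
    exists (mul b x). split.
    - exists (mul b h0), l0. split; [apply memM; assumption|]. split; [assumption|].
      rewrite Ex, !mulA. reflexivity.
    - exists one. split; [apply mem1|]. rewrite mulg1, sigma_mul, Es, Eh, !mulA,
        mulgV, mul1g. reflexivity. }
  split; [exact A|]. intros HL g. split; [apply A|].
  intros [x [[h0 [l0 [Hh0 [Ll0 Ex]]]] [l [Ll Es]]]].
  assert (C : mul l (sigma l) = one).
  { apply (lcancel x). rewrite mulA, <- Es, <- sigma_mul, <- Es, sigma_invol, mulg1. reflexivity. }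
  destruct (HL l Ll C) as [c [Lc Ec]].
  exists (mul x (inv c)). split.
  - exists h0, (mul l0 (inv c)). split; [assumption|]. split.
    + apply memM; [assumption| apply memV; assumption].
    + rewrite Ex, !mulA. reflexivity.
  - exists one. split; [apply mem1|]. rewrite mul1g, sigma_mul, Es, Ec, sigma_inv.
    rewrite <- !mulA, mulgV, mulg1. reflexivity.
Qed.
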